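(* Let $I$ be any instance of the Partition problem with $n$ jobs, processing times $p_1\ge p_2\ge\dots\ge p_n>0$, optimal makespan $y^*$ and set of local optima $\mathcal{L}$. Let $\epsilon>0$ and $s:=\lceil 2/\epsilon\rceil-1\le n/2$; jobs $1,\dots,s$ are called large and the others small. Then: (1) for all $j\in\{s+1,\dots,n\}$, $p_j\le\frac{\epsilon}{2}\sum_{i=1}^n p_i$; (2) if at least one small job is assigned to the fuller machine of a solution $x\in\mathcal{L}$, then $x$ is a $(1+\epsilon)$ approximation; (3) if $\sum_{i=s+1}^n p_i\ge\frac12\sum_{i=1}^n p_i$, then every $x\in\mathcal{L}$ is a $(1+\epsilon)$ approximation; (4) $|\{y\in((1+\epsilon)y^*,\infty):\exists x\in\mathcal{L} \text{ with } f(x)=y\}|\le 2^{2/\epsilon}$.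
   Context: Partition problem: a solution $x\in\{0,1\}^n$ assigns job $i$ to machine $M_1$ if $x_i=0$ and to $M_2$ if $x_i=1$; the makespan $f(x)=\max\{\sum_i p_ix_i,\sum_i p_i(1-x_i)\}$ is minimised and $y^*=\min_x f(x)$. The fuller machine of $x$ is the machine whose load attains $f(x)$. A local optimum is a solution such that no solution at Hamming distance $1$ has strictly smaller makespan. A $(1+\epsilon)$ approximation is a solution $x$ with $f(x)\le(1+\epsilon)y^*$. *)

(* Defs.v *)
From HB Require Import structures.
From mathcomp Require Import all_boot all_order all_algebra.
From mathcomp Require Import all_classical all_reals all_analysis.
Set Implicit Arguments. Unset Strict Implicit. Unset Printing Implicit Defensive.
Import Order.TTheory GRing.Theory Num.Theory.
Local Open Scope ring_scope.

Section Partition.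
Variables (R : realType) (n : nat) (p : 'I_n -> R).

(* A solution: x i = true means job i is on machine M2, false means M1. *)
Definition sol := {ffun 'I_n -> bool}.

Definition load1 (x : sol) : R := \sum_(i | ~~ x i) p i.
Definition load2 (x : sol) : R := \sum_(i | x i) p i.
Definition load (x : sol) (b : bool) : R := if b then load2 x else load1 x.

Definition makespan (x : sol) : R := Num.max (load2 x) (load1 x).

Definition opt : R :=
  \big[Num.min/makespan [ffun => false]]_(x : sol) makespan x.

Definition hamming (x x' : sol) : nat := #|[set i | x i != x' i]|.

Definition is_local_opt (x : sol) : Prop :=
  forall x' : sol, hamming x x' = 1%N -> ~ (makespan x' < makespan x).

Definition is_approx (eps : R) (x : sol) : Prop :=
  makespan x <= (1 + eps) * opt.

Definition on_fuller (x : sol) (j : 'I_n) : Prop :=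
  load x (x j) = makespan x.

End Partition.

(* Main.v *)
Require Import Defs.
From HB Require Import structures.
From mathcomp Require Import all_boot all_order all_algebra.
From mathcomp Require Import all_classical all_reals all_analysis.
From mathcomp Require Import lra.
Import Order.TTheory GRing.Theory Num.Theory.
Local Open Scope ring_scope.

Section Helpers.
Variables (R : realType) (n : nat) (p : 'I_n -> R).

Lemma loadE (x : sol n) b : load p x b = \sum_(i | x i == b) p i.
Proof.
by case: b; rewrite /load /load1 /load2; apply: eq_bigl => i; case: (x i).
Qed.

Lemma load_sum (x : sol n) b : load p x b + load p x (~~ b) = \sum_(i < n) p i.
Proof.
rewrite (bigID (fun i => x i == b)) /= !loadE; congr (_ + _).
by apply: eq_bigl => i; case: b; case: (x i).
Qed.

Lemma makespanE (x : sol n) b :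
  makespan p x = Num.max (load p x b) (load p x (~~ b)).
Proof. by case: b; rewrite /makespan /load // maxC. Qed.

Lemma makespan_ge (x : sol n) : (\sum_(i < n) p i) / 2 <= makespan p x.
Proof.
have := load_sum x true; rewrite (makespanE x true) => <-.
set a := load p x true; set c := load p x (~~ true).
have : a <= Num.max a c by rewrite le_max lexx.
have : c <= Num.max a c by rewrite le_max lexx orbT.
lra.
Qed.

Lemma opt_ge : (\sum_(i < n) p i) / 2 <= opt p.
Proof.
rewrite /opt; apply: (big_ind (fun y => (\sum_(i < n) p i) / 2 <= y)).
- exact: makespan_ge.
- by move=> a c ha hc; rewrite le_min ha hc.
- by move=> x _; exact: makespan_ge.
Qed.

Lemma sum_sub (P Q : pred 'I_n) : (forall i, 0 <= p i) ->
  (forall i, P i -> Q i) -> \sum_(i | P i) p i <= \sum_(i | Q i) p i.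
Proof.
move=> hp hPQ; rewrite [X in _ <= X](bigID P) /=.
rewrite (eq_bigl P); last by move=> i; case: (boolP (P i)) => h;
  rewrite ?andbT ?andbF //; rewrite hPQ.
by rewrite lerDl sumr_ge0.
Qed.

Lemma fuller_exists (x : sol n) : exists b, load p x b = makespan p x.
Proof.
rewrite (makespanE x true); case: (leP (load p x true) (load p x (~~ true))) => h.
- by exists false.
- by exists true.
Qed.

Lemma local_bound (x : sol n) j : (forall i, 0 < p i) -> is_local_opt p x ->
  on_fuller p x j -> 2 * makespan p x <= \sum_(i < n) p i + p j.
Proof.
move=> hp hloc hf; set b := x j.
pose x' : sol n := [ffun i => if i == j then ~~ x i else x i].
have hh : hamming x x' = 1%N.
  rewrite /hamming (_ : [set i | x i != x' i] = [set j]) ?cards1 //.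
  apply/setP=> i; rewrite !inE ffunE; case: (i =P j) => [->|_].
    by case: (x j).
  by rewrite eqxx.
have /negP := hloc x' hh; rewrite -leNgt => hle.
have e1 : load p x' (~~ b) = p j + load p x (~~ b).
  rewrite !loadE (bigD1 j) /=; last by rewrite ffunE eqxx.
  congr (_ + _); apply: eq_bigl => i; rewrite ffunE; case: (i =P j) => [->|_] /=.
    by rewrite eqxx andbF /b; case: (x j).
  by rewrite andbT.
have e2 : load p x' b = \sum_(i < n) p i - load p x' (~~ b).
  by rewrite -(load_sum x' b) addrK.
have e3 := load_sum x b.
rewrite /on_fuller -/b in hf.
have hpj := hp j.
move: hle; rewrite (makespanE x' b) e2 e1 le_max => /orP [h|h]; lra.
Qed.

End Helpers.

Theorem mainTheorem13 (R : realType) (n : nat) (p : 'I_n -> R) (eps : R) :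
  (forall i j : 'I_n, (i <= j)%N -> p j <= p i) ->
  (forall i : 'I_n, 0 < p i) ->
  0 < eps ->
  ((Num.ceil (2 / eps) - 1)%:~R <= n%:R / 2 :> R) ->
  let s : int := Num.ceil (2 / eps) - 1 in
  let total := \sum_(i < n) p i in
  (* (1) *)
  (forall j : 'I_n, s <= (j : nat)%:Z -> p j <= eps / 2 * total) /\
  (* (2) *)
  (forall x : sol n, is_local_opt p x ->
     (exists j : 'I_n, s <= (j : nat)%:Z /\ on_fuller p x j) ->
     is_approx p eps x) /\
  (* (3) *)
  ((\sum_(i < n | s <= (i : nat)%:Z) p i >= total / 2) ->
     forall x : sol n, is_local_opt p x -> is_approx p eps x) /\
  (* (4) *)
  ((size (undup [seq makespan p x |
        x <- enum [pred x : sol n |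
                   `[< is_local_opt p x >] && ((1 + eps) * opt p < makespan p x)]]))%:R
     <= powR 2 (2 / eps)).
Proof.
move=> hsort hpos heps hsn s T.
have hp0 : forall i, 0 <= p i by move=> i; exact: ltW.
have hT0 : 0 <= T by apply: sumr_ge0.
have hopt := @opt_ge R n p.
rewrite -/T in hopt.
have hc1 := ceil_ge (2 / eps).
have hc2 := ceilB1_lt (2 / eps).
have hc0 : 0 < Num.ceil (2 / eps) by rewrite ceil_gt0 divr_gt0.
have [k hk] : exists k : nat, Num.ceil (2 / eps) - 1 = k%:Z.
  exists `|Num.ceil (2 / eps) - 1|%N.
  by rewrite gez0_abs // subr_ge0 -gtz0_ge1.
have hs : s = k%:Z by [].
rewrite hs; clear hs.
rewrite hk in hc2 hsn.
have hc1' : 2 / eps <= k%:R + 1.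
  by move: hc1; rewrite -(subrK 1 (Num.ceil (2 / eps))) hk intrD.
have hk1 : 2 <= (k%:R + 1) * eps.
  by rewrite -ler_pdivrMr.
have hk2 : k%:R * eps < 2 by rewrite -ltr_pdivlMr.
have P1 : forall j : 'I_n, k%:Z <= (j : nat)%:Z -> p j <= eps / 2 * T.
  move=> j; rewrite lez_nat => hj.
  have hkn : (k.+1 <= n)%N by apply: leq_ltn_trans hj (ltn_ord j).
  have hcnt : \sum_(i < n | (i < k.+1)%N) (1:R) = k%:R + 1.
    by rewrite -(big_ord_widen _ (fun _ => (1:R)) hkn) sumr_const card_ord -addn1 natrD.
  have hsum : \sum_(i < n | (i < k.+1)%N) p j <= T.
    apply: (le_trans _ (@sum_sub R n p (fun i => (i < k.+1)%N) xpredT hp0 _)) => //.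
    apply: ler_sum => i hi; apply: hsort; rewrite ltnS in hi; exact: leq_trans hi hj.
  rewrite (_ : \sum_(i < n | (i < k.+1)%N) p j = (k%:R + 1) * p j) in hsum; last first.
    by rewrite -hcnt mulr_suml; apply: eq_bigr => i _; rewrite mul1r.
  have h1 := ler_wpM2l (hp0 j) hk1.
  have h2 := ler_wpM2r (ltW heps) hsum.
  nra.
have P2 : forall x : sol n, is_local_opt p x ->
     (exists j : 'I_n, k%:Z <= (j : nat)%:Z /\ on_fuller p x j) ->
     is_approx p eps x.
  move=> x hx [j [hj hf]].
  have h1 := @local_bound R n p x j hpos hx hf; rewrite -/T in h1.
  have h2 := P1 j hj.
  have h3 := ler_wpM2l (ltW heps) hopt.
  have h4 : 0 <= eps * T by rewrite mulr_ge0 // ltW.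
  rewrite /is_approx; lra.
have hopt0 : 0 <= opt p by apply: le_trans hopt; lra.
split; first exact: P1.
split; first exact: P2.
split.
  move=> hsmall x hx.
  have [b hb] := @fuller_exists R n p x.
  case: (boolP [exists j : 'I_n, (k <= j)%N && (x j == b)]).
    move=> /existsP [j /andP [hj /eqP hxj]].
    apply: P2 hx _; exists j; split; first by rewrite lez_nat.
    by rewrite /on_fuller hxj.
  move/existsPn => hno.
  have hge : \sum_(i < n | k%:Z <= (i : nat)%:Z) p i <= load p x (~~ b).
    rewrite loadE; apply: sum_sub => // i hi.
    rewrite lez_nat in hi; have := hno i; rewrite hi /=.
    by case: (x i) => /=; case: (b) => /=.
  have e := @load_sum R n p x b; rewrite -/T in e.
  have h3 : 0 <= eps * opt p by rewrite mulr_ge0 // ltW.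
  rewrite /is_approx; lra.
set l := [seq makespan p x | x <- enum _].
pose L := [set i : 'I_n | (i < k)%N].
pose g := fun A : {set 'I_n} => \sum_(i in A) p i.
have hsub : {subset undup l <= [seq g A | A <- enum (powerset L)]}.
  move=> y; rewrite mem_undup => /mapP [x]; rewrite mem_enum inE.
  move=> /andP [/asboolP hx hgt] ->.
  have [b hb] := @fuller_exists R n p x.
  have hall : forall i, x i == b -> (i < k)%N.
    move=> i /eqP hxi; rewrite ltnNge; apply/negP => hki.
    have : is_approx p eps x.
      apply: P2 hx _; exists i; split; first by rewrite lez_nat.
      by rewrite /on_fuller hxi.
    by rewrite /is_approx => h; move: hgt; rewrite ltNge h.
  apply/mapP; exists [set i | x i == b].
    by rewrite mem_enum powersetE; apply/fintype.subsetP => i; rewrite !inE; exact: hall.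
  by rewrite -hb loadE /g; apply: eq_bigl => i; rewrite inE.
have := uniq_leq_size (undup_uniq l) hsub.
rewrite size_map -cardE card_powerset => hle.
have hkn : (k <= n)%N.
  rewrite -(ler_nat R); have := ler0n R n; lra.
have hL : (#|L| <= k)%N.
  rewrite -sum1_card (eq_bigl (fun i : 'I_n => (i < k)%N)) => [|i]; last by rewrite inE.
  by rewrite -(big_ord_widen _ (fun _ => 1%N) hkn) sum1_card card_ord.
apply: (@le_trans _ _ (2 ^+ k)).
  rewrite -natrX ler_nat; apply: leq_trans hle _; exact: leq_pexp2l.
rewrite -powR_mulrn //; apply: ler_powR; first by rewrite ler1n.
by rewrite ler_pdivlMr //; exact: ltW hk2.
Qed.
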